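(* Let $(D,S)$ be a uniform steady-state bundle (as defined in the context). Then for any two channels $\mathcal{E},\mathcal{E}'\in D$, the phase steady-state spaces $S(\mathcal{E})$ and $S(\mathcal{E}')$ are isomorphic, i.e., they are in one-to-one correspondence.
   Context: Work with qubits on a lattice (in the thermodynamic limit); states are density matrices $\rho$ and observables $o$ have finite support and finite norm, with $\langle o|\rho\rangle=\mathrm{tr}(o^\dagger\rho)$. A quantum channel is a completely positive trace-preserving map. A channel $\mathcal{E}$ is called local if it obeys a Lieb–Robinson bound: there are constants $C,v,\alpha>0$ (depending only on the lattice and $\mathcal{E}$) such that for every state $\rho$, every observable $o_X$ of norm $1$ supported on $X$, every channel $\mathcal{V}_Y$ supported on $Y$, and every $t\ge 0$, $|\langle o_X|\mathcal{E}^t(\mathcal{V}_Y-\mathcal{I})|\rho\rangle|\le C\min(|X|,|Y|)\min(1,e^{\alpha(t-d_{XY}/v)})$, where $d_{XY}$ is the distance between $X$ and $Y$ and $\mathcal{I}$ is the identity map. A steady-state bundle $(D,S)$ consists of a connected open subset $D$ of the space of local channels together with an assignment to each $\mathcal{E}\in D$ of a convex set $S(\mathcal{E})$ of normalized states with $(\mathcal{E}-\mathcal{I})(\rho)=0$ for all $\rho\in S(\mathcal{E})$ (the phase steady states of $\mathcal{E}$; possibly a proper subset of all steady states). The bundle is uniform if $D$ can be covered by a family of open balls $\{B_i\}$ and there is a rate $\Delta>0$, independent of system size and uniform over all $B_i$, such that: for any $i$, any $\mathcal{E},\mathcal{E}'\in B_i$ and any $\rho\in S(\mathcal{E})$ there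 exists $\rho'\in S(\mathcal{E}')$ with $\mathcal{E}^t\rho'$ approaching $\rho$ exponentially, in the sense $|\langle o|\mathcal{E}^t\rho'-\rho\rangle|\le C_o e^{-\Delta t}\|o\|_\infty$ for every finitely supported observable $o$, with $C_o$ independent of $t$ and of the channels. *)

(* Defs.v *)
From HB Require Import structures.
From mathcomp Require Import all_boot all_order all_algebra.
From mathcomp Require Import finmap.
From mathcomp Require Import complex.
From mathcomp Require Import classical_sets reals.
From mathcomp.analysis Require Import sequences exp.

Unset Printing Implicit Defensive.

Import Order.TTheory GRing.Theory Num.Theory.
Local Open Scope ring_scope.
Local Open Scope complex_scope.

Section QLattice.
Variables (R : realType) (L : choiceType).
Local Notation C := R[i].

(* Qubits on the sites L.  A region is a finite set of sites X; the
   computational basis of the Hilbert space (C^2)^{(x) X} is indexed by the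
   configurations X -> bool. *)
Definition conf (X : {fset L}) := {ffun X -> bool}.
Definition op (X : {fset L}) := conf X -> conf X -> C.

(* value of a configuration at an arbitrary site (false outside the region) *)
Definition ext (Z : {fset L}) (a : conf Z) (l : L) : bool :=
  match (insub l : option Z) with Some z => a z | None => false end.

Arguments ext {Z}.

Definition restr (X Z : {fset L}) (a : conf Z) : conf X :=
  [ffun x : X => ext a (val x)].

Arguments restr X {Z}.

Definition agree_off (Y Z : {fset L}) (a b : conf Z) : bool :=
  [forall z : Z, (val z \notin Y) ==> (a z == b z)].

Arguments agree_off Y {Z}.

(* partial trace from Z down to X (over the sites of Z not in X) *)
Definition ptr (Z X : {fset L}) (A : op Z) : op X := fun s s' =>
  \sum_(a : conf Z) \sum_(a' : conf Z)
     (if [&& restr X a == s, restr X a' == s' & agree_off X a a']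
      then A a a' else 0).


Definition trace (X : {fset L}) (A : op X) : C := \sum_(s : conf X) A s s.

Definition psd (X : {fset L}) (A : op X) : Prop :=
  forall v : conf X -> C,
    0 <= \sum_(s : conf X) \sum_(s' : conf X) (v s)^* * A s s' * v s'.

Arguments trace {X}.
Arguments psd {X}.

(* Normalized states of the infinite lattice (states of the quasi-local
   algebra) = consistent families of finite-volume density matrices. *)
Record state := State {
  rho :> forall X : {fset L}, op X;
  rho_psd : forall X : {fset L}, psd (rho X);
  rho_tr : forall X : {fset L}, trace (rho X) = 1;
  rho_cons : forall X Y : {fset L}, fsubset X Y -> rho X = ptr Y X (rho Y) }.


(* finitely supported observables *)
Record obs := Obs { osupp : {fset L}; omat : op osupp }.

Definition pairing (o : obs) (r : state) : C :=
  \sum_(s : conf (osupp o)) \sum_(s' : conf (osupp o))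
     (omat o s s')^* * r (osupp o) s s'.

Definition vnorm (X : {fset L}) (v : conf X -> C) : R :=
  Num.sqrt (\sum_(s : conf X) complex.Re ((v s)^* * v s)).
Definition opapply (X : {fset L}) (A : op X) (v : conf X -> C) : conf X -> C :=
  fun s => \sum_(s' : conf X) A s s' * v s'.
Arguments vnorm {X}.
Arguments opapply {X}.

Definition opnorm (o : obs) : R :=
  sup [set r : R | exists v : conf (osupp o) -> C,
                     vnorm v = 1 /\ r = vnorm (opapply (omat o) v)].

Definition chan := state -> state.

Definition is_mix (lam : R) (r1 r2 r : state) : Prop :=
  forall X s s', r X s s' = lam%:C * r1 X s s' + (1 - lam)%:C * r2 X s s'.

(* (the restriction to states of) a trace-preserving positive linear map *)
Definition is_channel (E : chan) : Prop :=
  forall (lam : R) (r1 r2 r : state), 0 <= lam <= 1 ->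
    is_mix lam r1 r2 r -> is_mix lam (E r1) (E r2) (E r).

(* channels supported on a finite region Y: a CPTP map on op Y, given by
   its kernel K with (V rho)(a,a') = sum_(b,b') K a a' b b' rho(b,b') *)
Record lchan := LChan {
  lsupp : {fset L};
  kern : conf lsupp -> conf lsupp -> conf lsupp -> conf lsupp -> C;
  kern_CP : forall w : conf lsupp * conf lsupp -> C,
     0 <= \sum_(p : conf lsupp * conf lsupp) \sum_(q : conf lsupp * conf lsupp)
            (w p)^* * kern p.1 q.1 p.2 q.2 * w q;
  kern_TP : forall b b' : conf lsupp,
     \sum_(a : conf lsupp) kern a a b b' = (b == b')%:R }.



(* (V (x) id) applied to an operator on a region Z *)
Definition lchan_op (V : lchan) (Z : {fset L}) (A : op Z) : op Z := fun a a' =>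
  \sum_(b : conf Z) \sum_(b' : conf Z)
    (if agree_off (lsupp V) a b && agree_off (lsupp V) a' b'
     then kern V (restr (lsupp V) a) (restr (lsupp V) a')
                 (restr (lsupp V) b) (restr (lsupp V) b') * A b b'
     else 0).

Arguments lchan_op V {Z}.

(* s is the state V(r) of the infinite lattice *)
Definition lchan_state (V : lchan) (r s : state) : Prop :=
  forall X : {fset L},
    s X = ptr (X `|` lsupp V)%fset X (lchan_op V (r (X `|` lsupp V)%fset)).

Definition dist_set (dist : L -> L -> R) (X Y : {fset L}) : R :=
  inf [set r : R | exists x y, x \in X /\ y \in Y /\ r = dist x y].

(* Lieb--Robinson bound, t >= 0 a discrete time *)
Definition is_local (dist : L -> L -> R) (E : chan) : Prop :=
  exists (Cc v alpha : R), 0 < Cc /\ 0 < v /\ 0 < alpha /\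
    forall (r : state) (o : obs) (V : lchan) (s : state) (t : nat),
      opnorm o = 1 -> lchan_state V r s ->
      `| pairing o (iter t E s) - pairing o (iter t E r) |
        <= (Cc * Num.min (size (osupp o))%:R (size (lsupp V))%:R
               * Num.min 1 (expR (alpha * (t%:R
                     - dist_set dist (osupp o) (lsupp V) / v))))%:C.

Definition local_channel (dist : L -> L -> R) (E : chan) : Prop :=
  is_channel E /\ is_local dist E.

Definition is_metric (d : chan -> chan -> R) : Prop :=
  (forall E F, 0 <= d E F) /\ (forall E, d E E = 0) /\
  (forall E F, d E F = 0 -> E = F) /\ (forall E F, d E F = d F E) /\
  (forall E F G, d E G <= d E F + d F G).

Definition open_in_local (dist : L -> L -> R) (d : chan -> chan -> R)
    (D : set chan) : Prop :=
  forall E, D E -> exists2 e : R, 0 < e &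
    forall F, local_channel dist F -> d E F < e -> D F.

Definition rel_open (d : chan -> chan -> R) (D U : set chan) : Prop :=
  (forall E, U E -> D E) /\
  forall E, U E -> exists2 e : R, 0 < e & forall F, D F -> d E F < e -> U F.

Definition connected_in (d : chan -> chan -> R) (D : set chan) : Prop :=
  forall U1 U2 : set chan, rel_open d D U1 -> rel_open d D U2 ->
    (forall E, D E -> U1 E \/ U2 E) -> (forall E, ~ (U1 E /\ U2 E)) ->
    (forall E, ~ U1 E) \/ (forall E, ~ U2 E).

Definition convex_states (S : set state) : Prop :=
  forall (lam : R) (r1 r2 r : state), 0 <= lam <= 1 ->
    S r1 -> S r2 -> is_mix lam r1 r2 r -> S r.

Definition steady_state_bundle (dist : L -> L -> R) (d : chan -> chan -> R)
    (D : set chan) (S : chan -> set state) : Prop :=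
  [/\ forall E, D E -> local_channel dist E,
      open_in_local dist d D,
      connected_in d D &
      forall E, D E -> convex_states (S E) /\ forall r, S E r -> E r = r].

(* balls are given by (center, radius) pairs *)
Definition uniform_bundle (d : chan -> chan -> R)
    (D : set chan) (S : chan -> set state) : Prop :=
  exists B : set (chan * R),
    (forall b, B b -> 0 < b.2) /\
    (forall E, D E -> exists2 b, B b & d b.1 E < b.2) /\
    exists Delta : R, 0 < Delta /\
    exists Co : obs -> R,
      forall b, B b -> forall E E', D E -> D E' -> d b.1 E < b.2 -> d b.1 E' < b.2 ->
      forall r, S E r -> exists2 r', S E' r' &
        forall (o : obs) (t : nat),
          `| pairing o (iter t E r') - pairing o r |
            <= (Co o * expR (- (Delta * t%:R)) * opnorm o)%:C.

End QLattice.

Arguments is_metric {R L}.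
Arguments steady_state_bundle {R L}.
Arguments uniform_bundle {R L}.

(* Main.v *)
Require Import Defs.
From HB Require Import structures.
From mathcomp Require Import all_boot all_order all_algebra.
From mathcomp Require Import finmap.
From mathcomp Require Import complex.
From mathcomp Require Import classical_sets reals.
From mathcomp.analysis Require Import sequences exp.
From mathcomp Require Import boolp cardinality.
From mathcomp Require Import ring lra.

Import Order.TTheory GRing.Theory Num.Theory archimedean.Num.Theory archimedean.Num.Def.
Local Open Scope ring_scope.
Local Open Scope complex_scope.

Section Aux.
Variables (R : realType) (L : choiceType).

Lemma state_ext (r1 r2 : state R L) :
  (forall X s s', r1 X s s' = r2 X s s') -> r1 = r2.
Proof.
move=> H; case: r1 H => f1 p1 t1 c1; case: r2 => f2 p2 t2 c2 /= H.
have E : f1 = f2.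
  apply: functional_extensionality_dep => X; apply: funext => s; apply: funext => s'.
  exact: H.
subst f2; congr State; exact: Prop_irrelevance.
Qed.

Lemma pairing_delta (r : state R L) (X : {fset L}) (s0 s1 : conf L X) :
  pairing R L (Obs R L X (fun s s' : conf L X => if (s == s0) && (s' == s1) then 1 else 0)) r
  = r X s0 s1.
Proof.
rewrite /pairing /=.
transitivity (\sum_(s : conf L X) (if s == s0 then r X s s1 else 0)).
  apply: eq_bigr => s _; case: eqP => _ /=.
    rewrite (bigD1 s1) //= eqxx rmorph1 mul1r big1 ?addr0 // => s' /negPf ->.
    by rewrite rmorph0 mul0r.
  by rewrite big1 // => s' _; rewrite rmorph0 mul0r.
by rewrite -big_mkcond /= big_pred1_eq.
Qed.

Lemma pairing_inj (r1 r2 : state R L) :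
  (forall o, pairing R L o r1 = pairing R L o r2) -> r1 = r2.
Proof.
by move=> H; apply: state_ext => X s s'; rewrite -!pairing_delta H.
Qed.

Lemma decay_le0 (m K Delta : R) : 0 < Delta ->
  (forall t : nat, m <= K * expR (- (Delta * t%:R))) -> m <= 0.
Proof.
move=> D0 H; rewrite leNgt; apply/negP => m0.
have K0 : 0 < K by have := H 0%N; rewrite mulr0 oppr0 expR0 mulr1; apply: lt_le_trans.
set t := (truncn (K / (m * Delta))).+1.
have ht : K / (m * Delta) < t%:R by apply: truncnS_gt.
have := H t; rewrite expRN.
have e1 : 1 + Delta * t%:R <= expR (Delta * t%:R) by apply: expR_ge1Dx.
have q1 : 0 <= Delta * t%:R by rewrite mulr_ge0 // ltW.
have p1 : 0 < 1 + Delta * t%:R by lra.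
have : K * (expR (Delta * t%:R))^-1 <= K / (1 + Delta * t%:R).
  by rewrite ler_pM2l // lef_pV2 // ?posrE ?expR_gt0.
move=> h1 h2; have := le_trans h2 h1.
rewrite ler_pdivlMr // => h3.
move: ht; rewrite ltr_pdivrMr ?mulr_gt0 // => h4.
have h5 : t%:R * (m * Delta) <= m * (1 + Delta * t%:R).
  have -> : t%:R * (m * Delta) = m * (Delta * t%:R) by ring.
  by rewrite ler_pM2l // lerDr.
by have := lt_le_trans h4 h5; rewrite ltNge h3.
Qed.

Lemma norm_decay (a b : R[i]) (K Delta : R) : 0 < Delta ->
  (forall t : nat, `|a - b| <= (K * expR (- (Delta * t%:R)))%:C) -> a = b.
Proof.
move=> D0 H; apply/eqP; rewrite -subr_eq0 -normr_eq0; apply/eqP.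
move: H; rewrite normc_def => H.
suff: sqrtr ((complex.Re (a - b))^+2 + (complex.Im (a - b))^+2) <= 0.
  by rewrite le_eqVlt ltNge sqrtr_ge0 orbF => /eqP ->.
apply: (@decay_le0 _ K Delta D0) => t.
have := H t. rewrite lecR. done.
Qed.


Local Open Scope classical_set_scope.
Local Open Scope card_scope.

Lemma ball_le (S : chan R L -> set (state R L)) (F G : chan R L) (Delta : R)
  (Co : obs R L -> R) : 0 < Delta ->
  (forall r, S F r -> exists2 r', S G r' &
        forall (o : obs R L) (t : nat),
          `| pairing R L o (iter t F r') - pairing R L o r |
            <= (Co o * expR (- (Delta * t%:R)) * opnorm R L o)%:C) ->
  S F #<= S G.
Proof.
move=> D0 H.
have : forall r, exists r', S F r -> S G r' /\ forall (o : obs R L) (t : nat),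
          `| pairing R L o (iter t F r') - pairing R L o r |
            <= (Co o * expR (- (Delta * t%:R)) * opnorm R L o)%:C.
  move=> r; case: (pselect (S F r)) => [/H [r' h1 h2]|nr]; first by exists r'.
  by exists r.
case/choice => g Hg.
have inj : {in S F &, injective g}.
  move=> r1 r2 /set_mem h1 /set_mem h2 e.
  have [_ b1] := Hg r1 h1; have [_ b2] := Hg r2 h2.
  apply: pairing_inj => o.
  apply: (@norm_decay (pairing R L o r1) (pairing R L o r2)
           (2 * Co o * opnorm R L o) Delta D0) => t.
  apply: le_trans (ler_distD (pairing R L o (iter t F (g r1))) _ _) _.
  move: (b1 o t); rewrite e distrC => b1t.
  have hs := lerD b1t (b2 o t).
  have h3 : (Co o * expR (- (Delta * t%:R)) * opnorm R L o)%:C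
      + (Co o * expR (- (Delta * t%:R)) * opnorm R L o)%:C
      <= (2 * Co o * opnorm R L o * expR (- (Delta * t%:R)))%:C .
    by rewrite -rmorphD /= lecR le_eqVlt; apply/orP; left; apply/eqP; ring.
  exact: (le_trans hs h3).
rewrite (card_le_eql (card_esym (inj_card_eq inj))); apply: subset_card_le.
by move=> _ [r hr <-]; have [] := Hg r hr.
Qed.

End Aux.

Local Open Scope classical_set_scope.
Local Open Scope card_scope.

Theorem theorem1 (R : realType) (L : choiceType) (dist : L -> L -> R)
    (d : chan R L -> chan R L -> R) (D : set (chan R L))
    (S : chan R L -> set (state R L)) :
  is_metric d ->
  steady_state_bundle dist d D S ->
  uniform_bundle d D S ->
  forall E E', D E -> D E' ->
  exists f : state R L -> state R L,
    [/\ forall r, S E r -> S E' (f r),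
        forall r1 r2, S E r1 -> S E r2 -> f r1 = f r2 -> r1 = r2 &
        forall r', S E' r' -> exists2 r, S E r & f r = r'].
Proof.
move=> [d0 [dxx [d0eq [dsym dtri]]]] [Dloc _ Dconn DS].
move=> [B [Bpos [Bcov [Delta [D0 [Co HB]]]]]] E E' DE DE'.
have same : forall b F G, B b -> D F -> D G -> d b.1 F < b.2 -> d b.1 G < b.2 ->
    S F #= S G.
  move=> b F G Bb DF DG hF hG; apply: Cantor_Bernstein.
    by apply: (@ball_le R L S F G Delta Co) => // r; exact: (HB b Bb F G DF DG hF hG r).
  by apply: (@ball_le R L S G F Delta Co) => // r; exact: (HB b Bb G F DG DF hG hF r).
have near : forall F, D F -> exists2 e : R, 0 < e & forall G, D G -> d F G < e ->
    S F #= S G.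
  move=> F DF; have [b Bb hb] := Bcov F DF.
  exists (b.2 - d b.1 F); first by rewrite subr_gt0.
  move=> G DG hFG; apply: (same b) => //.
  have := dtri b.1 F G; lra.
pose U1 := fun F => D F /\ (S E #= S F).
pose U2 := fun F => D F /\ ~ (S E #= S F).
have eEE' : S E #= S E'.
  have H1 : rel_open R L d D U1.
    split; first by move=> F [].
    move=> F [DF eF].
    have [e e0 he] := near F DF; exists e => // G DG hG; split => //.
    exact: card_eq_trans eF (he G DG hG).
  have H2 : rel_open R L d D U2.
    split; first by move=> F [].
    move=> F [DF eF].
    have [e e0 he] := near F DF; exists e => // G DG hG; split => // eG.
    by apply: eF; apply: card_eq_trans eG (card_esym (he G DG hG)).
  have H3 : forall F, D F -> U1 F \/ U2 F.
    by move=> F DF; case: (pselect (S E #= S F)) => h; [left|right].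
  have H4 : forall F, ~ (U1 F /\ U2 F) by move=> F [[_ h1] [_ h2]].
  case: (Dconn U1 U2 H1 H2 H3 H4) => h.
  - by exfalso; apply: (h E); split.
  - by apply: contrapT => nb; apply: (h E'); split.
have [f [g fg gf]] := card_bijP eEE'.
pose F r := match pselect (r \in S E) with
            | left h => val (f (exist _ r h)) | right _ => r end.
have FE : forall r (h : r \in S E), F r = val (f (exist _ r h)).
  move=> r h; rewrite /F; case: pselect => [h'|//].
  by rewrite (Prop_irrelevance h' h).
exists F; split.
- by move=> r hr; rewrite (FE r (mem_set hr)); apply: set_mem; apply: valP.
- move=> r1 r2 h1 h2; rewrite (FE r1 (mem_set h1)) (FE r2 (mem_set h2)).
  move/val_inj => e.
  have := congr1 g e; rewrite !fg => e'.
  exact: (congr1 val e').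
- move=> r' h'; exists (val (g (exist _ r' (mem_set h')))).
    by apply: set_mem; apply: valP.
  rewrite (FE _ (valP _)) /=.
  have -> : exist (fun x => x \in S E) (val (g (exist _ r' (mem_set h')))) (valP _)
           = g (exist _ r' (mem_set h')) by apply: val_inj.
  by rewrite gf.
Qed.
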